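(* Let $p\ge 1$, let $n_1,\dots,n_p\ge1$ and $k_s\in[n_s]$ for each $s$. Suppose there is a maximum-size non-trivially intersecting family $\mathcal{F}\subseteq \prod_{s}\binom{[n_s]}{k_s}$ which is $Q$-shifted for some $Q\subsetneq [p]$ such that $k_t=1$ for every $t\notin Q$. Then there is a maximum-size non-trivially intersecting family $\mathcal{F}'\subseteq \prod_{s}\binom{[n_s]}{k_s}$ which is shifted.
   Context: Multi-part setting: the ground set is the disjoint union $\bigsqcup_{s=1}^p [n_s]$ of $p$ parts, $[n]=\{1,\dots,n\}$. For $F_s\subseteq[n_s]$, $\bigsqcup_s F_s$ denotes the subset having $F_s$ in part $s$; $\prod_{s}\binom{[n_s]}{k_s}$ is the collection of all $\bigsqcup_s F_s$ with $|F_s|=k_s$ for all $s$. A family is intersecting if any two of its sets intersect (in some part); trivially intersecting if some element (in some part) lies in all its sets; non-trivially intersecting if intersecting but not trivially intersecting. ''Maximum-size'' means of maximum size among all non-trivially intersecting subfamilies of $\prod_{s}\binom{[n_s]}{k_s}$. Shifting: for $t\in[p]$, $1\le i<j\le n_t$ and $F=\bigsqcup_s F_s$, $S_t^{i,j}(F)=F$ if $i\in F_t$ or $j\notin F_t$, and otherwise $S_t^{i,j}(F)$ replaces $F_t$ by $(F_t\setminus\{j\})\cup\{i\}$. For a family, $S_t^{i,j}(\mathcal F)=\{S_t^{i,j}(F):F\in\mathcal F\}\cup\{F: F\in\mathcal F,\ S_t^{i,j}(F)\in\mathcal F\}$. $\mathcal F$ is $t$-shifted if $S_t^{i,j}(\mathcal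 F)=\mathcal F$ for all $1\le i<j\le n_t$, and shifted if $t$-shifted for all $t\in[p]$. A non-trivially intersecting family $\mathcal F$ is $Q$-shifted (for $Q\subseteq[p]$) if it is $s$-shifted for each $s\in Q$, and for each $s\notin Q$ there are $1\le i_s<j_s\le n_s$ such that $S_s^{i_s,j_s}(\mathcal F)$ is trivially intersecting. *)

(* Defs.v *)
From mathcomp Require Import all_boot.
Set Implicit Arguments. Unset Strict Implicit. Unset Printing Implicit Defensive.


(* Ground set: disjoint union of parts [n_s], s in 'I_p; element (s, i) with
   i : 'I_(n s) (0-based: i stands for i+1). *)
Definition ground (p : nat) (n : 'I_p -> nat) : finType :=
  {s : 'I_p & 'I_(n s)}.

Definition elt p (n : 'I_p -> nat) (s : 'I_p) (i : 'I_(n s)) : ground n :=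
  existT (fun s => 'I_(n s)) s i.

Definition part p (n : 'I_p -> nat) (A : {set ground n}) (s : 'I_p)
  : {set 'I_(n s)} := [set i | elt i \in A].

Definition prod_binom p (n k : 'I_p -> nat) : {set {set ground n}} :=
  [set A | [forall s, #|part A s| == k s]].

Definition intersecting p (n : 'I_p -> nat) (F : {set {set ground n}}) : Prop :=
  forall A B, A \in F -> B \in F -> A :&: B != set0.

Definition trivially_intersecting p (n : 'I_p -> nat)
  (F : {set {set ground n}}) : Prop :=
  exists x : ground n, forall A, A \in F -> x \in A.

Definition nontrivially_intersecting p (n : 'I_p -> nat)
  (F : {set {set ground n}}) : Prop :=
  intersecting F /\ ~ trivially_intersecting F.

Definition max_nontriv p (n k : 'I_p -> nat) (F : {set {set ground n}}) : Prop :=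
  [/\ F \subset prod_binom n k, nontrivially_intersecting F &
      forall F' : {set {set ground n}}, F' \subset prod_binom n k ->
        nontrivially_intersecting F' -> #|F'| <= #|F| ].

Definition shift_set p (n : 'I_p -> nat) (t : 'I_p) (i j : 'I_(n t))
  (A : {set ground n}) : {set ground n} :=
  if (elt i \in A) || (elt j \notin A) then A
  else (A :\ elt j) :|: [set elt i].

Definition shift_fam p (n : 'I_p -> nat) (t : 'I_p) (i j : 'I_(n t))
  (F : {set {set ground n}}) : {set {set ground n}} :=
  [set shift_set i j A | A in F] :|: [set A in F | shift_set i j A \in F].

Definition t_shifted p (n : 'I_p -> nat) (t : 'I_p) (F : {set {set ground n}})
  : Prop := forall i j : 'I_(n t), i < j -> shift_fam i j F = F.

Definition shifted p (n : 'I_p -> nat) (F : {set {set ground n}}) : Prop :=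
  forall t : 'I_p, t_shifted t F.

Definition Q_shifted p (n : 'I_p -> nat) (Q : {set 'I_p})
  (F : {set {set ground n}}) : Prop :=
  [/\ nontrivially_intersecting F,
      (forall s, s \in Q -> t_shifted s F) &
      (forall s, s \notin Q -> exists i j : 'I_(n s),
          i < j /\ trivially_intersecting (shift_fam i j F))].
Arguments max_nontriv {p} n k F.

(* Main.v *)
Require Import Defs.
From mathcomp Require Import all_boot all_fingroup.
Set Implicit Arguments. Unset Strict Implicit. Unset Printing Implicit Defensive.

Section Basics.
Variables (p : nat) (n k : 'I_p -> nat).

Definition gmap (pi : forall s, {perm 'I_(n s)}) (x : ground n) : ground n :=
  existT (fun s => 'I_(n s)) (tag x) (pi (tag x) (tagged x)).
Definition relab pi (X : {set ground n}) : {set ground n} := [set x | gmap pi x \in X].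

Lemma gmapK pi : cancel (gmap pi) (gmap (fun s => (pi s)^-1)%g).
Proof. by case=> s a; rewrite /gmap /= permK. Qed.
Lemma gmap_inj pi : injective (gmap pi).
Proof. exact: can_inj (gmapK pi). Qed.

Lemma in_relab pi s (a : 'I_(n s)) X : (elt a \in relab pi X) = (elt (pi s a) \in X).
Proof. by rewrite inE. Qed.

Lemma part_relab pi X s : part (relab pi X) s = [set a | pi s a \in part X s].
Proof. by apply/setP=> a; rewrite !inE. Qed.

Lemma card_relab pi X : #|relab pi X| = #|X|.
Proof. by rewrite -[relab pi X]/(gmap pi @^-1: X) card_preimset //; apply: gmap_inj. Qed.

Lemma relabK pi : cancel (relab pi) (relab (fun s => (pi s)^-1)%g).
Proof.
move=> X; apply/setP=> x; rewrite !inE.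
by rewrite -[gmap pi _]/(gmap pi (gmap (fun s => (pi s)^-1)%g x)) -{2}(gmapK (fun s => (pi s)^-1)%g x) /gmap /= invgK.
Qed.

Lemma relab_inj pi : injective (relab pi).
Proof. exact: can_inj (relabK pi). Qed.

Lemma eq_set_part (X Y : {set ground n}) : (forall s, part X s = part Y s) -> X = Y.
Proof. by move=> H; apply/setP=> -[s a]; move/setP/(_ a): (H s); rewrite !inE. Qed.

Lemma elt_eq s t (a : 'I_(n s)) (b : 'I_(n t)) : @elt p n s a == elt b -> s = t.
Proof. by move/eq_tag. Qed.

Lemma elt_eqE s (a b : 'I_(n s)) : (@elt p n s a == elt b) = (a == b).
Proof. by rewrite /elt eq_Tagged. Qed.

Lemma in_part (X : {set ground n}) s a : (a \in part X s) = (elt a \in X).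
Proof. by rewrite inE. Qed.

Lemma relab_binom pi X : X \in prod_binom n k -> relab pi X \in prod_binom n k.
Proof.
rewrite !inE => /forallP H; apply/forallP=> s; rewrite part_relab.
have ->: [set a | pi s a \in part X s] = pi s @^-1: part X s by apply/setP=> a; rewrite !inE.
by rewrite card_preimset ?H //; apply: perm_inj.
Qed.
End Basics.
Lemma card_init N K : K <= N -> #|[set a : 'I_N | a < K]| = K.
Proof.
move=> h.
have ->: [set a : 'I_N | a < K] = widen_ord h @: [set: 'I_K].
  apply/setP=> a; rewrite inE; apply/idP/imsetP => [Ha|[b _ ->]]; last by rewrite /= ltn_ord.
  by exists (Ordinal Ha) => //; apply: val_inj.
rewrite card_imset ?cardsT ?card_ord //.
by move=> x y /(congr1 val) /= /val_inj.
Qed.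

Lemma card_shift p (n : 'I_p -> nat) t (i j : 'I_(n t)) (S : {set 'I_(n t)}) :
  i \notin S -> j \in S -> #|S :\ j :|: [set i]| = #|S|.
Proof.
move=> hi hj; rewrite setUC cardsU1 !inE negb_and hi orbT.
by rewrite (cardsD1 j S) hj.
Qed.

Section Shift.
Variables (p : nat) (n k : 'I_p -> nat).

Lemma part_shift_ne t (i j : 'I_(n t)) (X : {set ground n}) s : t != s ->
  part (X :\ elt j :|: [set elt i]) s = part X s.
Proof.
move=> ne; apply/setP=> a; rewrite !inE.
have e1 : (elt a == elt j) = false.
  by apply/negbTE/negP=> /elt_eq E; rewrite E eqxx in ne.
have e2 : (elt a == elt i) = false.
  by apply/negbTE/negP=> /elt_eq E; rewrite E eqxx in ne.
by rewrite e1 e2 /= orbF.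
Qed.

Lemma part_shift_eq t (i j : 'I_(n t)) (X : {set ground n}) :
  part (X :\ elt j :|: [set elt i]) t = part X t :\ j :|: [set i].
Proof. by apply/setP=> a; rewrite !inE !elt_eqE. Qed.

Lemma shift_set_binom t (i j : 'I_(n t)) X :
  X \in prod_binom n k -> shift_set i j X \in prod_binom n k.
Proof.
rewrite /shift_set; case: ifP => // /norP[hi /negbNE hj].
rewrite !inE => /forallP H; apply/forallP => s.
case: (eqVneq t s) => [<-|ne]; last by rewrite part_shift_ne.
by rewrite part_shift_eq card_shift ?H // in_part.
Qed.

Lemma shift_fam_id t (i j : 'I_(n t)) (G : {set {set ground n}}) :
  (forall X, X \in G -> shift_set i j X \in G) -> shift_fam i j G = G.
Proof.
move=> H; apply/setP=> X; rewrite /shift_fam !inE; apply/idP/idP.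
  by case/orP=> [/imsetP[Y hY ->]|/andP[]//]; apply: H.
by move=> hX; rewrite hX H ?orbT.
Qed.

End Shift.

Section Main.
Variables (p : nat) (n k : 'I_p -> nat).
Variables (hn : forall s, 0 < n s) (hk : forall s, 0 < k s <= n s).
Variables (Q : {set 'I_p}) (F : {set {set ground n}}).
Hypothesis hk1 : forall t, t \notin Q -> k t = 1.
Hypothesis Fsub : F \subset prod_binom n k.
Hypothesis Fnt : nontrivially_intersecting F.
Hypothesis Fsh : forall s, s \in Q -> t_shifted s F.
Variables (i_ j_ : forall s, 'I_(n s)).
Hypothesis hij : forall s, s \notin Q ->
  i_ s < j_ s /\ trivially_intersecting (shift_fam (i_ s) (j_ s) F).

Lemma F_binom A s : A \in F -> #|part A s| = k s.
Proof. by move/(subsetP Fsub); rewrite inE => /forallP /(_ s) /eqP. Qed.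

Lemma ij_neq w : w \notin Q -> i_ w != j_ w.
Proof. by case/hij=> h _; rewrite neq_ltn h. Qed.

Lemma ex_notin x : exists2 A, A \in F & x \notin A.
Proof.
case: (boolP [exists A in F, x \notin A]) => [/existsP[A /andP[]]|]; first by exists A.
rewrite negb_exists => /forallP H; exfalso; apply: Fnt.2; exists x => A hA.
by move: (H A); rewrite hA /= negbK.
Qed.

Lemma witness w : w \notin Q -> forall A, A \in shift_fam (i_ w) (j_ w) F -> elt (i_ w) \in A.
Proof.
move=> hw; case: (hij hw) => _ [x Hx].
case: (eqVneq x (elt (i_ w))) => [<-//|ne].
exfalso; apply: Fnt.2; exists x => A hA.
have: x \in shift_set (i_ w) (j_ w) A.
  by apply: Hx; rewrite !inE; apply/orP; left; apply: imset_f.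
rewrite /shift_set; case: ifP => // _; rewrite !inE (negbTE ne) orbF.
by case/andP.
Qed.

Lemma single1 (T : finType) (S : {set T}) a : #|S| = 1 -> a \in S -> S = [set a].
Proof. by move/eqP/cards1P=> [b ->]; rewrite inE => /eqP ->. Qed.

Lemma part1 A w : A \in F -> w \notin Q ->
  part A w = [set i_ w] \/ part A w = [set j_ w].
Proof.
move=> hA hw; have hc : #|part A w| = 1 by rewrite F_binom // hk1.
have := witness hw (A := shift_set (i_ w) (j_ w) A).
rewrite !inE imset_f // => /(_ isT); rewrite /shift_set.
case: ifP => [/orP[hi _|hj]|/norP[_ /negbNE hj] _].
- by left; apply: single1; rewrite ?in_part.
- by left; apply: single1; rewrite ?in_part.
by right; apply: single1; rewrite ?in_part.
Qed.

Definition fperm w s : {perm 'I_(n s)} := if s == w then tperm (i_ s) (j_ s) else 1%g.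
Definition flip w := relab (fperm w).

Lemma part_flip_ne w X s : s != w -> part (flip w X) s = part X s.
Proof. by move=> ne; rewrite part_relab /fperm (negbTE ne); apply/setP=> a; rewrite inE perm1. Qed.

Lemma part_flip_eq w X : part (flip w X) w = [set a | tperm (i_ w) (j_ w) a \in part X w].
Proof. by rewrite part_relab /fperm eqxx. Qed.

Lemma tperm_pre_j w : [set a | tperm (i_ w) (j_ w) a \in [set j_ w]] = [set i_ w].
Proof.
apply/setP=> a; rewrite !inE; apply/eqP/eqP => [h|->]; last by rewrite tpermL.
by apply: (@perm_inj _ (tperm (i_ w) (j_ w))); rewrite h tpermL.
Qed.

Lemma tperm_pre_i w : [set a | tperm (i_ w) (j_ w) a \in [set i_ w]] = [set j_ w].
Proof.
apply/setP=> a; rewrite !inE; apply/eqP/eqP => [h|->]; last by rewrite tpermR.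
by apply: (@perm_inj _ (tperm (i_ w) (j_ w))); rewrite h tpermR.
Qed.

Lemma flipK w : involutive (flip w).
Proof.
move=> X; apply: eq_set_part => s; rewrite !part_relab; apply/setP=> a; rewrite !inE.
by rewrite /fperm; case: ifP; rewrite ?tpermK ?perm1.
Qed.

Lemma flip_binom w X : X \in prod_binom n k -> flip w X \in prod_binom n k.
Proof. exact: relab_binom. Qed.

Lemma part_j A w : A \in F -> w \notin Q -> elt (j_ w) \in A -> part A w = [set j_ w].
Proof.
move=> hA hw hj; case: (part1 hA hw) => // E.
by move: hj; rewrite -in_part E inE eq_sym (negbTE (ij_neq hw)).
Qed.

Lemma part_i A w : A \in F -> w \notin Q -> elt (i_ w) \in A -> part A w = [set i_ w].
Proof.
move=> hA hw hj; case: (part1 hA hw) => // E.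
by move: hj; rewrite -in_part E inE (negbTE (ij_neq hw)).
Qed.

Lemma flip_notin_j w A : w \notin Q -> A \in F -> elt (j_ w) \in A -> flip w A \notin F.
Proof.
move=> hw hA hj; have hAw := part_j hA hw hj.
apply/negP=> hf.
have hi : elt (i_ w) \notin A.
  by rewrite -in_part hAw inE (ij_neq hw).
have E : shift_set (i_ w) (j_ w) A = flip w A.
  rewrite /shift_set (negbTE hi) hj /=.
  apply: eq_set_part => s; case: (eqVneq s w) => [->|ne].
    rewrite part_shift_eq part_flip_eq hAw tperm_pre_j.
    by apply/setP=> a; rewrite !inE; case: eqP => // ->; rewrite eqxx.
  by rewrite part_shift_ne 1?eq_sym // part_flip_ne.
have := witness hw (A := A); rewrite !inE hA E hf orbT => /(_ isT).
by rewrite (negbTE hi).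
Qed.

Lemma flip_notin_i w A : w \notin Q -> A \in F -> elt (i_ w) \in A -> flip w A \notin F.
Proof.
move=> hw hA hi; apply/negP=> hf.
have : elt (j_ w) \in flip w A.
  by rewrite -in_part part_flip_eq (part_i hA hw hi) tperm_pre_i inE.
by move/(flip_notin_j hw hf); rewrite flipK hA.
Qed.


Definition star (X : {set ground n}) : {set ground n} :=
  [set x : ground n | if tag x \in Q then tagged x < k (tag x) else x \in X].

Lemma part_star X s : part (star X) s = if s \in Q then [set a : 'I_(n s) | a < k s] else part X s.
Proof. by apply/setP=> a; rewrite !inE; case: ifP; rewrite ?inE. Qed.

Lemma star_in_aux N X : #|X :\: star X| <= N -> X \in F -> star X \in F.
Proof.
elim: N X => [|N IH] X hN hX.
  suff -> : star X = X by [].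
  have E : X :\: star X = set0 by apply/eqP; rewrite -cards_eq0 -leqn0.
  apply: eq_set_part => s; rewrite part_star; case: ifP => // hs.
  apply/eqP; rewrite eq_sym eqEcard F_binom // card_init; last by case/andP: (hk s).
  rewrite leqnn andbT; apply/subsetP=> a ha; rewrite inE.
  apply: contraT => hb; have : elt a \in X :\: star X by rewrite !inE /= hs hb -in_part.
  by rewrite E inE.
case: (boolP [forall s in Q, part X s == [set a : 'I_(n s) | a < k s]]) => [/forallP H|].
  suff -> : star X = X by [].
  apply: eq_set_part => s; rewrite part_star; case: ifP => // hs.
  by move: (H s); rewrite hs => /eqP.
rewrite negb_forall_in => /existsP[q /andP[hq hne]].
have hkq : k q <= n q by case/andP: (hk q).
have hc := F_binom q hX.
have [a ha1 ha2] : exists2 a, a \in [set c : 'I_(n q) | c < k q] & a \notin part X q.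
  apply/exists_inP; rewrite -negb_forall_in; apply: contra hne => /forall_inP H.
  rewrite eq_sym eqEcard hc card_init // leqnn andbT; apply/subsetP=> c; exact: H.
have [b hb1 hb2] : exists2 b, b \in part X q & b \notin [set c : 'I_(n q) | c < k q].
  apply/exists_inP; rewrite -negb_forall_in; apply: contra hne => /forall_inP H.
  by rewrite eqEcard hc card_init // leqnn andbT; apply/subsetP=> c; exact: H.
rewrite inE in ha1; rewrite inE in hb2; rewrite in_part in ha2; rewrite in_part in hb1.
set Y := shift_set a b X.
have hY : Y = X :\ elt b :|: [set elt a] by rewrite /Y /shift_set (negbTE ha2) hb1.
have YF : Y \in F.
  have hab : a < b by apply: (leq_trans ha1); rewrite leqNgt.
  by rewrite -(Fsh hq hab) !inE imset_f.
have hstar : star Y = star X.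
  apply/setP=> -[s c]; rewrite !inE /=; case: ifP => // hs.
  rewrite hY !inE; have ne : q != s by apply: contraFN hs => /eqP <-.
  have e1 : (elt c == elt b) = false.
    by apply/negbTE/negP=> /elt_eq E; rewrite E eqxx in ne.
  have e2 : (elt c == elt a) = false.
    by apply/negbTE/negP=> /elt_eq E; rewrite E eqxx in ne.
  by rewrite /elt in e1 e2; rewrite e1 e2 /= orbF.
rewrite -hstar; apply: IH YF; rewrite -ltnS; apply: leq_trans hN.
apply: proper_card; rewrite hstar; apply/properP; split.
  apply/subsetP=> x; rewrite hY !inE; case/andP=> hx /orP[/andP[_ hX']|/eqP hxa]; first by rewrite hx hX'.
  by move: hx; rewrite hxa /= hq ha1.
exists (elt b); first by rewrite !inE /= hq hb2.
have nab : (b == a) = false.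
  by apply/negbTE; apply: contra hb2 => /eqP ->.
by rewrite hY !inE eqxx /= hq (negbTE hb2) /= elt_eqE nab.
Qed.

Lemma star_in X : X \in F -> star X \in F.
Proof. exact: star_in_aux. Qed.

Lemma adj w X Y : w \notin Q -> X \in F -> Y \in F ->
  elt (j_ w) \in X -> elt (i_ w) \in Y ->
  (forall u, u \notin Q -> u != w -> part X u = part Y u) -> False.
Proof.
move=> hw hX hY hj hi H.
have sX := star_in hX; have sY := star_in hY.
have hj' : elt (j_ w) \in star X by rewrite inE /= (negbTE hw).
have := flip_notin_j hw sX hj'.
suff -> : flip w (star X) = star Y by rewrite sY.
apply: eq_set_part => s; case: (eqVneq s w) => [->|ne].
  by rewrite part_flip_eq !part_star (negbTE hw) (part_j hX hw hj) (part_i hY hw hi) tperm_pre_j.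
rewrite part_flip_ne // !part_star; case: ifP => // hs.
by apply: H; rewrite ?hs.
Qed.


Lemma ex_j w : w \notin Q -> exists2 X, X \in F & elt (j_ w) \in X.
Proof.
move=> hw; case: (ex_notin (elt (i_ w))) => A hA hi; exists A => //.
case: (part1 hA hw) => E; last by rewrite -in_part E inE.
by move: hi; rewrite -in_part E inE eqxx.
Qed.

Lemma ex_i w : w \notin Q -> exists2 X, X \in F & elt (i_ w) \in X.
Proof.
move=> hw; case: (ex_notin (elt (j_ w))) => A hA hi; exists A => //.
case: (part1 hA hw) => E; first by rewrite -in_part E inE.
by move: hi; rewrite -in_part E inE eqxx.
Qed.

Hypothesis Fmax : forall G : {set {set ground n}}, G \subset prod_binom n k ->
  nontrivially_intersecting G -> #|G| <= #|F|.
Hypothesis hQ : Q \proper [set: 'I_p].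

Lemma m2_false t u : t \notin Q -> u \notin Q -> u != t ->
  (forall c, c \notin Q -> c != t -> c = u) -> False.
Proof.
move=> ht hu hut Hother.
case: (ex_j ht) => X hX hjX; case: (ex_i ht) => Y hY hiY.
case: (eqVneq (part X u) (part Y u)) => [E|NE].
  by apply: (adj ht hX hY hjX hiY) => c hc hct; rewrite (Hother c hc hct).
set Z := flip t Y.
have ZF : Z \notin F := flip_notin_i ht hY hiY.
have hZj : elt (j_ t) \in Z.
  by rewrite -in_part part_flip_eq (part_i hY ht hiY) tperm_pre_i inE.
have Zu : part Z u = part Y u by apply: part_flip_ne.
have key : forall W, W \in F -> Z :&: W != set0.
  move=> W hW; case: (part1 hW ht) => EWt; last first.
    by apply/set0Pn; exists (elt (j_ t)); rewrite in_setI hZj /= -(in_part W) EWt inE.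
  case: (eqVneq (part W u) (part Y u)) => [EW|NW]; last first.
    exfalso; apply: (adj ht hX hW hjX); first by rewrite -in_part EWt inE.
    move=> c hc hct; rewrite (Hother c hc hct).
    move: NE NW; case: (part1 hX hu) => ->; case: (part1 hY hu) => ->;
      case: (part1 hW hu) => ->; by rewrite ?eqxx.
  have /eqP/cards1P[y Ey] : #|part Y u| = 1 by rewrite F_binom // hk1.
  apply/set0Pn; exists (elt y); rewrite in_setI -!in_part Zu EW Ey inE eqxx //.
have Gsub : Z |: F \subset prod_binom n k.
  apply/subsetP=> A /setU1P[->|hA]; last exact: (subsetP Fsub).
  by apply: flip_binom; apply: (subsetP Fsub).
have Gnt : nontrivially_intersecting (Z |: F).
  split.
    move=> A B /setU1P[->|hA] /setU1P[->|hB].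
    - by apply/set0Pn; exists (elt (j_ t)); rewrite in_setI hZj.
    - exact: key.
    - by rewrite setIC; apply: key.
    - exact: Fnt.1.
  move=> [x Hx]; apply: Fnt.2; exists x => A hA; apply: Hx; exact: setU1r.
have := Fmax Gsub Gnt; rewrite cardsU1 ZF.
by rewrite add1n ltnn.
Qed.

Lemma three : exists a b c, [/\ a \notin Q, b \notin Q & c \notin Q] /\ [/\ a != b, a != c & b != c].
Proof.
case/properP: hQ => _ [t _ ht].
case: (boolP [exists u, (u \notin Q) && (u != t)]) => [/existsP[u /andP[hu hut]]|].
  case: (boolP [exists c, [&& c \notin Q, c != t & c != u]]) => [/existsP[c /and3P[hc hct hcu]]|].
    by exists t, u, c; split; split => //; rewrite eq_sym.
  rewrite negb_exists => /forallP H; exfalso; apply: (m2_false ht hu hut) => c hc hct.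
  by apply/eqP; move: (H c); rewrite hc hct /= negbK.
rewrite negb_exists => /forallP H; exfalso.
case: (ex_j ht) => X hX hjX; case: (ex_i ht) => Y hY hiY.
apply: (adj ht hX hY hjX hiY) => c hc hct.
by move: (H c); rewrite hc hct.
Qed.


Definition zero s : 'I_(n s) := Ordinal (hn s).
Definition one s : 'I_(n s) := insubd (zero s) 1.

Lemma two_le u : u \notin Q -> 1 < n u.
Proof.
case/hij=> h _; apply: leq_ltn_trans (ltn_ord (j_ u)).
by apply: leq_ltn_trans h.
Qed.

Lemma val_one u : u \notin Q -> val (one u) = 1.
Proof. by move=> hu; rewrite /one val_insubd two_le. Qed.

Lemma zero_one u : u \notin Q -> (zero u == one u) = false.
Proof. by move=> hu; apply/negbTE; rewrite -val_eqE val_one. Qed.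

Definition zb u (X : {set ground n}) := elt (zero u) \in X.
Definition good a b c X := [|| zb a X && zb b X, zb a X && zb c X | zb b X && zb c X].
Definition Fp a b c := [set X in prod_binom n k | good a b c X].

Lemma Fp_int a b c : intersecting (Fp a b c).
Proof.
move=> A B; rewrite !inE => /andP[_ gA] /andP[_ gB].
have : [|| zb a A && zb a B, zb b A && zb b B | zb c A && zb c B].
  move: gA gB; rewrite /good; case: (zb a A); case: (zb b A); case: (zb c A);
  case: (zb a B); case: (zb b B); case: (zb c B) => //.
case/or3P=> /andP[h1 h2]; apply/set0Pn;
  [exists (elt (zero a)) | exists (elt (zero b)) | exists (elt (zero c))]; by rewrite in_setI; apply/andP.
Qed.

Lemma zb_shift u t (i j : 'I_(n t)) X : i < j -> zb u X -> zb u (shift_set i j X).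
Proof.
move=> hij' hz; rewrite /zb /shift_set; case: ifP => // _.
rewrite !inE; apply/orP; left; rewrite [_ \in X]hz andbT.
have [Eut|neut] := eqVneq u t; last first.
  by apply/negP=> /elt_eq E; rewrite E eqxx in neut.
subst u; rewrite elt_eqE; apply/negP=> /eqP E.
by move: hij'; rewrite -E.
Qed.

Lemma Fp_shifted a b c : shifted (Fp a b c).
Proof.
move=> t i j hij'; apply: shift_fam_id => X; rewrite in_set => /andP[hX gX].
rewrite in_set shift_set_binom //=; move: gX; rewrite /good.
move: (@zb_shift a _ _ _ X hij') (@zb_shift b _ _ _ X hij') (@zb_shift c _ _ _ X hij').
case: (zb a X); case: (zb b X); case: (zb c X);
case: (zb a (shift_set i j X)); case: (zb b (shift_set i j X)); case: (zb c (shift_set i j X));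
by move=> /= H1 H2 H3 //; (try by move: (H1 isT)); (try by move: (H2 isT)); (try by move: (H3 isT)).
Qed.

Definition mk (A : {set ground n}) (P : pred 'I_p) : {set ground n} :=
  [set x : ground n | if tag x \in Q then x \in A
     else (if P (tag x) then tagged x == one (tag x) else tagged x == zero (tag x))].

Lemma part_mk A P s : part (mk A P) s =
  if s \in Q then part A s else (if P s then [set one s] else [set zero s]).
Proof. by case hs: (s \in Q); case hP: (P s); apply/setP=> x; rewrite !inE /= ?hs ?hP. Qed.

Lemma mk_binom A P : A \in prod_binom n k -> mk A P \in prod_binom n k.
Proof.
rewrite !inE => /forallP H; apply/forallP=> s; rewrite part_mk.
case: ifP => [_|hs]; first exact: H.
by rewrite (hk1 (negbT hs)); case: ifP; rewrite cards1.
Qed.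

Lemma zb_mk A P u : u \notin Q -> zb u (mk A P) = ~~ P u.
Proof.
by move=> hu; rewrite /zb inE /= (negbTE hu); case: ifP => //= _; rewrite zero_one.
Qed.

Lemma Fp_nt a b c : a \notin Q -> b \notin Q -> c \notin Q -> a != b -> a != c -> b != c ->
  nontrivially_intersecting (Fp a b c).
Proof.
move=> ha hb hc hab hac hbc; split; first exact: Fp_int.
case=> -[s x] Hx.
have inF : forall A, A \in F -> A \in prod_binom n k by move=> A; apply: (subsetP Fsub).
case: (boolP (s \in Q)) => hs.
  case: (ex_notin (elt x)) => A hA hxA.
  have : elt x \in mk A pred0.
    apply: Hx; rewrite inE mk_binom ?inF //= /good !zb_mk //.
  by rewrite inE /= hs (negbTE hxA).
case: (ex_notin (elt x)) => A0 hA0 _.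
case: (eqVneq x (zero s)) => [Ex|nx].
  have : elt x \in mk A0 (pred1 s).
    apply: Hx; rewrite inE mk_binom ?inF //= /good !zb_mk //=.
    have nab : ~~((a == s) && (b == s)) by apply: contra hab => /andP[/eqP-> /eqP->].
    have nac : ~~((a == s) && (c == s)) by apply: contra hac => /andP[/eqP-> /eqP->].
    have nbc : ~~((b == s) && (c == s)) by apply: contra hbc => /andP[/eqP-> /eqP->].
    by move: nab nac nbc; case: (a == s); case: (b == s); case: (c == s).
  by rewrite inE /= (negbTE hs) eqxx Ex zero_one.
have : elt x \in mk A0 pred0.
  by apply: Hx; rewrite inE mk_binom ?inF //= /good !zb_mk.
by rewrite inE /= (negbTE hs) (negbTE nx).
Qed.


Definition C := [set X in prod_binom n k |
  [forall u, (u \notin Q) ==> ((elt (i_ u) \in X) || (elt (j_ u) \in X))]].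
Definition C0 := [set X in prod_binom n k |
  [forall u, (u \notin Q) ==> ((elt (zero u) \in X) || (elt (one u) \in X))]].

Lemma card_union_disj (T : finType) (A B : {set T}) : A :&: B = set0 -> #|A :|: B| = #|A| + #|B|.
Proof. by move=> h; rewrite cardsU h cards0 subn0. Qed.

Lemma L1 w : w \notin Q -> 2 * #|F| <= #|C|.
Proof.
move=> hw.
have inF : forall A, A \in F -> A \in prod_binom n k by move=> A; apply: (subsetP Fsub).
have cFF : #|flip w @: F| = #|F| by rewrite card_imset //; apply: relab_inj.
have disj : F :&: flip w @: F = set0.
  apply/setP=> X; rewrite !inE; apply/negP=> /andP[hX /imsetP[Y hY EX]].
  move: hX; rewrite EX; apply/negP.
  case: (part1 hY hw) => E.
    by apply: flip_notin_i => //; rewrite -in_part E inE.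
  by apply: flip_notin_j => //; rewrite -in_part E inE.
rewrite mul2n -addnn -{2}cFF -card_union_disj //; apply: subset_leq_card.
apply/subsetP=> X /setUP[hX|/imsetP[Y hY ->]]; rewrite in_set.
  rewrite inF //=; apply/forallP=> u; apply/implyP=> hu.
  by case: (part1 hX hu) => E; rewrite -!in_part E !inE eqxx ?orbT.
rewrite flip_binom ?inF //=; apply/forallP=> u; apply/implyP=> hu.
rewrite !in_relab /fperm; case: eqP => _; last by rewrite !perm1; case: (part1 hY hu) => E; rewrite -!in_part E !inE eqxx ?orbT.
by rewrite tpermL tpermR; case: (part1 hY hu) => E; rewrite -!in_part E !inE eqxx ?orbT.
Qed.

Definition psi s : {perm 'I_(n s)} :=
  if s \in Q then 1%g else (tperm (one s) (j_ s) * tperm (zero s) (i_ s))%g.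

Lemma psi0 s : s \notin Q -> psi s (zero s) = i_ s.
Proof.
move=> hs; rewrite /psi (negbTE hs) permM (@tpermD _ (one s) (j_ s) (zero s)) ?tpermL //.
  by rewrite eq_sym zero_one.
have [h _] := hij hs; rewrite -val_eqE /= neq_ltn; apply/orP; right.
exact: leq_ltn_trans h.
Qed.

Lemma psi1 s : s \notin Q -> psi s (one s) = j_ s.
Proof.
move=> hs; rewrite /psi (negbTE hs) permM tpermL (@tpermD _ (zero s) (i_ s) (j_ s)) //.
  rewrite -val_eqE /= neq_ltn; apply/orP; left.
  have [h _] := hij hs; exact: leq_ltn_trans h.
by rewrite neq_ltn (proj1 (hij hs)) ?orbT.
Qed.

Lemma L2 : #|C| <= #|C0|.
Proof.
rewrite -(card_imset _ (@relab_inj _ _ psi)); apply: subset_leq_card.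
apply/subsetP=> _ /imsetP[X hX ->]; move: hX; rewrite /C in_set => /andP[hb /forallP H].
rewrite /C0 in_set relab_binom //=; apply/forallP=> u; apply/implyP=> hu.
by rewrite !in_relab psi0 // psi1 //; move/implyP: (H u); apply.
Qed.

Definition gam a b c s : {perm 'I_(n s)} :=
  if [|| s == a, s == b | s == c] then tperm (zero s) (one s) else 1%g.

Lemma compK a b c : involutive (relab (gam a b c)).
Proof.
move=> X; apply: eq_set_part => s; rewrite !part_relab; apply/setP=> x; rewrite !inE.
by rewrite /gam; case: ifP; rewrite ?tpermK ?perm1.
Qed.

Lemma zb_comp a b c u X : u \notin Q -> [|| u == a, u == b | u == c] ->
  zb u (relab (gam a b c) X) = (elt (one u) \in X).
Proof. by move=> hu hE; rewrite /zb in_relab /gam hE tpermL. Qed.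

Lemma in_Fp a b c Y : (Y \in Fp a b c) = (Y \in prod_binom n k) && good a b c Y.
Proof. by rewrite /Fp in_set. Qed.

Lemma L3 a b c : a \notin Q -> b \notin Q -> c \notin Q -> #|C0| <= 2 * #|Fp a b c|.
Proof.
move=> ha hb hc.
set comp := relab (gam a b c).
have cc : #|comp @: Fp a b c| = #|Fp a b c| by rewrite card_imset //; apply: relab_inj.
apply: (@leq_trans #|Fp a b c :|: comp @: Fp a b c|); last first.
  by rewrite cardsU cc mul2n -addnn leq_subr.
apply: subset_leq_card; apply/subsetP=> X; rewrite in_set => /andP[hX /forallP H].
rewrite in_setU; case: (boolP (X \in Fp a b c)) => // hF; apply/orP; right.
apply/imsetP; exists (comp X); last by rewrite /comp compK.
move: hF; rewrite !in_Fp hX relab_binom //= /good => ng.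
rewrite !zb_comp ?eqxx ?orbT //.
move/implyP: (H a) => /(_ ha); move/implyP: (H b) => /(_ hb); move/implyP: (H c) => /(_ hc).
move: ng; rewrite /zb.
by case: (elt (zero a) \in X); case: (elt (zero b) \in X); case: (elt (zero c) \in X);
  case: (elt (one a) \in X); case: (elt (one b) \in X); case: (elt (one c) \in X).
Qed.

Lemma final : exists F' : {set {set ground n}}, max_nontriv n k F' /\ shifted F'.
Proof.
have [a [b [c [[ha hb hc] [hab hac hbc]]]]] := three.
exists (Fp a b c); split; last exact: Fp_shifted.
have le : #|F| <= #|Fp a b c|.
  have := leq_trans (L1 ha) (leq_trans L2 (L3 ha hb hc)).
  by rewrite leq_pmul2l.
split.
- by apply/subsetP=> X; rewrite in_set => /andP[].
- exact: Fp_nt.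
by move=> G hG hnt; apply: leq_trans (Fmax hG hnt) le.
Qed.

End Main.

Lemma trivP p (n : 'I_p -> nat) (G : {set {set ground n}}) :
  reflect (trivially_intersecting G) [exists x, [forall A in G, x \in A]].
Proof.
apply: (iffP existsP) => [[x /forall_inP H]|[x H]]; exists x => //.
by apply/forall_inP.
Qed.

Unset Implicit Arguments.

Theorem lemma2p4 (p : nat) (n k : 'I_p -> nat)
  (hp : 1 <= p) (hn : forall s, 1 <= n s) (hk : forall s, 1 <= k s <= n s)
  (Q : {set 'I_p}) (F : {set {set ground n}}) :
  Q \proper [set: 'I_p] ->
  (forall t, t \notin Q -> k t = 1) ->
  max_nontriv n k F ->
  Q_shifted Q F ->
  exists F' : {set {set ground n}}, max_nontriv n k F' /\ shifted F'.
Proof.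
move=> hQ hk1 [Fsub Fnt Fmax] [_ Fsh Ftr].
pose P s (ij : 'I_(n s) * 'I_(n s)) :=
  (ij.1 < ij.2) && [exists x, [forall A in shift_fam ij.1 ij.2 F, x \in A]].
pose z s : 'I_(n s) := Ordinal (hn s).
pose ij s := odflt (z s, z s) [pick x | P s x].
have hij : forall s, s \notin Q ->
    (ij s).1 < (ij s).2 /\ trivially_intersecting (shift_fam (ij s).1 (ij s).2 F).
  move=> s hs; rewrite /ij; case: pickP => [x /andP[h1 /trivP h2]|none] //=.
  case: (Ftr s hs) => i [j [hlt htr]].
  by move: (none (i, j)); rewrite /P /= hlt /=; move/trivP: htr => ->.
exact: (final hn hk hk1 Fsub Fnt Fsh hij Fmax hQ).
Qed.
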